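(* Let $G$ be a solvable group of derived length $d$. (i) If $\exp(G)$ is odd, then $\exp(G\otimes G)$ divides $(\exp(G))^d$; in particular $\exp(M(G))$ divides $(\exp(G))^d$. (ii) If $\exp(G)$ is even, then $\exp(G\otimes G)$ divides $2^{d-1}(\exp(G))^d$; in particular $\exp(M(G))$ divides $2^{d-1}(\exp(G))^d$.
   Context: Conventions: ${}^g h = ghg^{-1}$, $[g,h]=ghg^{-1}h^{-1}$. The nonabelian tensor square $G\otimes G$ is the group generated by symbols $g\otimes h$ ($g,h\in G$) subject to $gg'\otimes h=({}^g g'\otimes {}^g h)(g\otimes h)$ and $g\otimes hh'=(g\otimes h)({}^h g\otimes {}^h h')$. $M(G)\cong H_2(G,\mathbb{Z})$ is the Schur multiplier. *)

(* Defs.v *)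
From Stdlib Require Import List Arith PeanoNat.
Import ListNotations.

Record is_group (G : Type) (mul : G -> G -> G) (inv : G -> G) (one : G) : Prop := {
  grp_assoc : forall x y z, mul x (mul y z) = mul (mul x y) z;
  grp_mul1l : forall x, mul one x = x;
  grp_mul1r : forall x, mul x one = x;
  grp_mulVl : forall x, mul (inv x) x = one;
  grp_mulVr : forall x, mul x (inv x) = one
}.

Section GroupDefs.
Variables (G : Type) (mul : G -> G -> G) (inv : G -> G) (one : G).

Fixpoint gpow (x : G) (n : nat) : G :=
  match n with 0 => one | S n => mul x (gpow x n) end.

Definition gconj (g h : G) : G := mul (mul g h) (inv g).
Definition gcomm (g h : G) : G := mul (mul g h) (mul (inv g) (inv h)).

Inductive derived : nat -> G -> Prop :=
| der0 x : derived 0 x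
| der_comm i a b : derived i a -> derived i b -> derived (S i) (gcomm a b)
| der_one i : derived (S i) one
| der_mul i x y : derived (S i) x -> derived (S i) y -> derived (S i) (mul x y)
| der_inv i x : derived (S i) x -> derived (S i) (inv x).

Definition derived_length (d : nat) : Prop :=
  (forall x, derived d x -> x = one) /\
  (forall k, k < d -> exists x, derived k x /\ x <> one).

Definition exponent (e : nat) : Prop :=
  0 < e /\ (forall x, gpow x e = one) /\
  (forall m, 0 < m -> (forall x, gpow x m = one) -> e <= m).

End GroupDefs.

Definition word (A : Type) := list (bool * A).   (* (true,a) = a, (false,a) = a^-1 *)

Definition winv {A} (w : word A) : word A :=
  rev (map (fun p => (negb (fst p), snd p)) w).

Fixpoint wpow {A} (w : word A) (n : nat) : word A :=
  match n with 0 => [] | S n => w ++ wpow w n end.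

(* equality in the group < A | Rel >: the congruence on words generated by
   free cancellation and the relators *)
Inductive peq {A} (Rel : word A -> Prop) : word A -> word A -> Prop :=
| peq_refl w : peq Rel w w
| peq_sym u v : peq Rel u v -> peq Rel v u
| peq_trans u v w : peq Rel u v -> peq Rel v w -> peq Rel u w
| peq_cancel u v b a : peq Rel (u ++ (b, a) :: (negb b, a) :: v) (u ++ v)
| peq_rel u v r : Rel r -> peq Rel (u ++ r ++ v) (u ++ v).

Inductive in_gen {A} (Rel : word A -> Prop) (S : word A -> Prop) : word A -> Prop :=
| gen_base w : S w -> in_gen Rel S w
| gen_nil : in_gen Rel S []
| gen_app u v : in_gen Rel S u -> in_gen Rel S v -> in_gen Rel S (u ++ v)
| gen_inv u : in_gen Rel S u -> in_gen Rel S (winv u)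
| gen_peq u v : peq Rel u v -> in_gen Rel S u -> in_gen Rel S v.

Definition no_rel {A} : word A -> Prop := fun _ => False.

Definition wcomm {A} (u v : word A) : word A := u ++ v ++ winv u ++ winv v.

Section Tensor.
Variables (G : Type) (mul : G -> G -> G) (inv : G -> G) (one : G).

(* defining relators of the nonabelian tensor square G (x) G, letter (g,h) = g (x) h:
   gg' (x) h = (^g g' (x) ^g h)(g (x) h),   g (x) hh' = (g (x) h)(^h g (x) ^h h') *)
Definition tensor_rel (r : word (G * G)) : Prop :=
  (exists g g' h, r = [(true, (mul g g', h)); (false, (g, h));
                       (false, (gconj G mul inv g g', gconj G mul inv g h))]) \/
  (exists g h h', r = [(true, (g, mul h h'));
                       (false, (gconj G mul inv h g, gconj G mul inv h h'));
                       (false, (g, h))]).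

Definition tensor_exp_dvd (N : nat) : Prop :=
  forall w : word (G * G), peq tensor_rel (wpow w N) [].

(* evaluation F -> G of the free group F on the set G *)
Fixpoint eval (w : word G) : G :=
  match w with
  | [] => one
  | (b, a) :: w => mul (if b then a else inv a) (eval w)
  end.

(* Hopf formula M(G) = (R /\ [F,F]) / [F,R], with F free on G, R = ker eval *)
Definition in_FF (w : word G) : Prop :=
  in_gen no_rel (fun c => exists u v, c = wcomm u v) w.
Definition in_FR (w : word G) : Prop :=
  in_gen no_rel (fun c => exists u r, eval r = one /\ c = wcomm u r) w.

Definition schur_exp_dvd (N : nat) : Prop :=
  forall w : word G, in_FF w -> eval w = one -> in_FR (wpow w N).

End Tensor.

(* Main.v *)
Require Import Defs.
From Stdlib Require Import Arith PeanoNat.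
From Stdlib Require Import Setoid Morphisms Lia List.
Import ListNotations.


Record SG : Type := mkSG {
  car :> Type;
  eqv : car -> car -> Prop;
  op : car -> car -> car;
  iv : car -> car;
  un : car;
  eqv_refl : forall x, eqv x x;
  eqv_sym : forall x y, eqv x y -> eqv y x;
  eqv_trans : forall x y z, eqv x y -> eqv y z -> eqv x z;
  op_compat : forall x x' y y', eqv x x' -> eqv y y' -> eqv (op x y) (op x' y');
  iv_compat : forall x x', eqv x x' -> eqv (iv x) (iv x');
  opA : forall x y z, eqv (op x (op y z)) (op (op x y) z);
  op1l : forall x, eqv (op un x) x;
  op1r : forall x, eqv (op x un) x;
  opVl : forall x, eqv (op (iv x) x) un;
  opVr : forall x, eqv (op x (iv x)) un }.

Arguments eqv {s}. Arguments op {s}. Arguments iv {s}. Arguments un {s}.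
Arguments opA {s}. Arguments op1l {s}. Arguments op1r {s}. Arguments opVl {s}. Arguments opVr {s}.

Add Parametric Relation (H : SG) : (car H) (@eqv H)
  reflexivity proved by (eqv_refl H) symmetry proved by (eqv_sym H)
  transitivity proved by (eqv_trans H) as eqv_rel.
Add Parametric Morphism (H : SG) : (@op H) with signature
  (@eqv H) ==> (@eqv H) ==> (@eqv H) as op_mor.
Proof. intros; apply op_compat; auto. Qed.
Add Parametric Morphism (H : SG) : (@iv H) with signature
  (@eqv H) ==> (@eqv H) as iv_mor.
Proof. exact (iv_compat H). Qed.

Infix "≈" := eqv (at level 70).
Infix "⋅" := op (at level 40, left associativity).

Fixpoint pw {H : SG} (x : H) (n : nat) : H :=
  match n with 0 => un | S n => x ⋅ pw x n end.

Fixpoint tri (n : nat) : nat := match n with 0 => 0 | S k => k + tri k end.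


Section Gen.
Variable H : SG.
Implicit Types x y z t : car H.

Lemma opA' x y z : (x ⋅ y) ⋅ z ≈ x ⋅ (y ⋅ z).
Proof. symmetry; apply opA. Qed.
Lemma opK x y : x ⋅ (iv x ⋅ y) ≈ y.
Proof. rewrite opA, opVr, op1l; reflexivity. Qed.
Lemma opVK x y : iv x ⋅ (x ⋅ y) ≈ y.
Proof. rewrite opA, opVl, op1l; reflexivity. Qed.
Lemma uniq_inv x y : x ⋅ y ≈ un -> y ≈ iv x.
Proof. intro E. rewrite <- (opVK x y), E, op1r; reflexivity. Qed.
Lemma uniq_inv' x y : x ⋅ y ≈ un -> x ≈ iv y.
Proof. intro E. rewrite <- (op1r x), <- (opVr y), opA, E, op1l; reflexivity. Qed.
Lemma ivK x : iv (iv x) ≈ x.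
Proof. symmetry; apply uniq_inv, opVl. Qed.
Lemma ivM x y : iv (x ⋅ y) ≈ iv y ⋅ iv x.
Proof. symmetry; apply uniq_inv. rewrite opA', (opA y), opVr, op1l, opVr; reflexivity. Qed.
Lemma iv1 : iv (@un H) ≈ un.
Proof. symmetry; apply uniq_inv, op1l. Qed.
Ltac gn := repeat (rewrite opA' || rewrite opVK || rewrite opK || rewrite opVl || rewrite opVr
   || rewrite op1l || rewrite op1r || rewrite ivM || rewrite ivK || rewrite iv1).

Lemma eq_of_div x y : x ⋅ iv y ≈ un -> x ≈ y.
Proof. intro E. rewrite (uniq_inv' _ _ E), ivK; reflexivity. Qed.
Lemma div_of_eq x y : x ≈ y -> x ⋅ iv y ≈ un.
Proof. intro E; rewrite E; apply opVr. Qed.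
Lemma op_cancel_l x y z : x ⋅ y ≈ x ⋅ z -> y ≈ z.
Proof. intro E. rewrite <- (opVK x y), E, opVK; reflexivity. Qed.
Lemma op_cancel_r x y z : y ⋅ x ≈ z ⋅ x -> y ≈ z.
Proof. intro E. rewrite <- (op1r y), <- (opVr x), opA, E, opA', opVr, op1r; reflexivity. Qed.

Global Instance pw_mor : Proper (eqv ==> eq ==> eqv) (@pw H).
Proof. intros x y E n m <-. induction n; simpl; [reflexivity| apply op_compat; auto]. Qed.

Lemma pw_succ_r x n : pw x (S n) ≈ pw x n ⋅ x.
Proof. induction n; simpl. rewrite op1r, op1l; reflexivity.
  simpl in IHn. rewrite IHn at 1. rewrite opA; reflexivity. Qed.
Lemma pw_add x a b : pw x (a + b) ≈ pw x a ⋅ pw x b.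
Proof. induction a; simpl. rewrite op1l; reflexivity. rewrite IHa, opA; reflexivity. Qed.
Lemma pw_mul x a b : pw x (a * b) ≈ pw (pw x a) b.
Proof. induction b; simpl. rewrite Nat.mul_0_r; reflexivity.
  rewrite Nat.mul_succ_r, pw_add, IHb. rewrite <- pw_succ_r. simpl. reflexivity. Qed.
Lemma pw_un n : pw (@un H) n ≈ un.
Proof. induction n; simpl. reflexivity. rewrite IHn, op1l; reflexivity. Qed.
Lemma pw_iv x n : pw (iv x) n ≈ iv (pw x n).
Proof. induction n; simpl. rewrite iv1; reflexivity.
  rewrite IHn. change (x ⋅ pw x n) with (pw x (S n)). rewrite pw_succ_r, ivM; reflexivity. Qed.
Lemma pw_one x : pw x 1 ≈ x.
Proof. simpl; apply op1r. Qed.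
Lemma pw_dvd x m n : pw x m ≈ un -> Nat.divide m n -> pw x n ≈ un.
Proof. intros E [k ->]. rewrite Nat.mul_comm, pw_mul, E, pw_un; reflexivity. Qed.

Definition central c := forall t, c ⋅ t ≈ t ⋅ c.
Lemma central_proper c d : c ≈ d -> central c -> central d.
Proof. intros E C t. rewrite <- E; apply C. Qed.
Lemma central_un : central un.
Proof. intro t; rewrite op1l, op1r; reflexivity. Qed.
Lemma central_op c d : central c -> central d -> central (c ⋅ d).
Proof. unfold central in *. intros C D t. rewrite opA', D, opA, C, opA'; reflexivity. Qed.
Lemma central_iv c : central c -> central (iv c).
Proof. unfold central in *. intros C t. apply (op_cancel_l c). rewrite opK, opA, C, opA', opVr, op1r; reflexivity. Qed.
Lemma central_pw c n : central c -> central (pw c n).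
Proof. intro C; induction n; simpl. apply central_un. apply central_op; auto. Qed.

Lemma pw_comm x y n : x ⋅ y ≈ y ⋅ x -> pw (x ⋅ y) n ≈ pw x n ⋅ pw y n.
Proof. intro C. assert (Cn : forall k, pw x k ⋅ y ≈ y ⋅ pw x k).
  { induction k; simpl. rewrite op1l, op1r; reflexivity.
    rewrite opA', IHk, opA, C, opA'; reflexivity. }
  induction n; simpl. rewrite op1l; reflexivity.
  rewrite IHn. rewrite !opA'. apply op_compat; [reflexivity|].
  rewrite !opA, Cn; reflexivity. Qed.

Lemma pw_central_op c x n : central c -> pw (c ⋅ x) n ≈ pw c n ⋅ pw x n.
Proof. intro C. apply pw_comm, C. Qed.

Definition comm x y := x ⋅ y ⋅ iv x ⋅ iv y.
Global Instance comm_mor : Proper (eqv ==> eqv ==> eqv) comm.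
Proof. intros a b E c d F; unfold comm; rewrite E, F; reflexivity. Qed.

Lemma comm_swap x y : x ⋅ y ≈ comm x y ⋅ (y ⋅ x).
Proof. unfold comm. rewrite !opA', opVK, opVl, op1r. reflexivity. Qed.

Definition Q2 (m : nat) c := central c /\ pw c m ≈ un.
Lemma Q2_proper m c d : c ≈ d -> Q2 m c -> Q2 m d.
Proof. intros E [C P]; split. eapply central_proper; eauto. rewrite <- E; auto. Qed.
Lemma Q2_un m : Q2 m un.
Proof. split. apply central_un. apply pw_un. Qed.
Lemma Q2_op m c d : Q2 m c -> Q2 m d -> Q2 m (c ⋅ d).
Proof. intros [C P] [D R]; split. apply central_op; auto.
  rewrite pw_central_op, P, R, op1l; auto; reflexivity. Qed.
Lemma Q2_iv m c : Q2 m c -> Q2 m (iv c).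
Proof. intros [C P]; split. apply central_iv; auto. rewrite pw_iv, P, iv1; reflexivity. Qed.

Lemma comm_op_l x y z : central (comm y z) -> comm (x ⋅ y) z ≈ comm y z ⋅ comm x z.
Proof. intro C. set (c := comm y z) in *.
  assert (e1 : y ⋅ (z ⋅ iv y) ≈ c ⋅ z).
  { unfold c, comm. rewrite !opA', opVl, op1r. reflexivity. }
  assert (e2 : comm (x ⋅ y) z ≈ x ⋅ (y ⋅ (z ⋅ iv y)) ⋅ (iv x ⋅ iv z)).
  { unfold comm. rewrite ivM, !opA'. reflexivity. }
  rewrite e2, e1. rewrite (opA x c), <- (C x). unfold comm. rewrite !opA'. reflexivity. Qed.

Lemma comm_iv_l x z : central (comm x z) -> comm (iv x) z ≈ iv (comm x z).
Proof. intro C. set (c := comm x z) in *.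
  assert (e : c ≈ iv x ⋅ (c ⋅ x)) by (rewrite (C x), opVK; reflexivity).
  rewrite e. unfold c, comm. rewrite !ivM, !ivK, !opA', opVl, op1r. reflexivity. Qed.

Lemma comm_un_l z : comm un z ≈ un.
Proof. unfold comm. rewrite op1l, iv1, op1r, opVr; reflexivity. Qed.

Lemma comm_anti x y : comm x y ≈ iv (comm y x).
Proof. unfold comm. rewrite !ivM, !ivK, !opA'. reflexivity. Qed.

Inductive sub (P : car H -> Prop) : car H -> Prop :=
| sb_base x : P x -> sub P x
| sb_un : sub P un
| sb_op x y : sub P x -> sub P y -> sub P (x ⋅ y)
| sb_iv x : sub P x -> sub P (iv x)
| sb_eqv x y : x ≈ y -> sub P x -> sub P y.

Lemma Q2_first (P A : car H -> Prop) m :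
  (forall s a, P s -> A a -> Q2 m (comm s a)) ->
  forall k a, sub P k -> A a -> Q2 m (comm k a).
Proof. intros HP k a Hk Ha. induction Hk.
  - auto.
  - eapply Q2_proper. symmetry; apply comm_un_l. apply Q2_un.
  - eapply Q2_proper. symmetry; apply comm_op_l, IHHk2. apply Q2_op; auto.
  - eapply Q2_proper. symmetry; apply comm_iv_l, IHHk. apply Q2_iv; auto.
  - eapply Q2_proper; [|apply IHHk]. rewrite H0; reflexivity.
Qed.

Lemma Q2_all (P : car H -> Prop) m :
  (forall s s', P s -> P s' -> Q2 m (comm s s')) ->
  forall k k', sub P k -> sub P k' -> Q2 m (comm k k').
Proof. intros HP.
  assert (H1 : forall k s, sub P k -> P s -> Q2 m (comm k s)) by (intros; eapply Q2_first; eauto).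
  assert (H2 : forall s k, P s -> sub P k -> Q2 m (comm s k)).
  { intros. eapply Q2_proper. symmetry; apply comm_anti. apply Q2_iv; auto. }
  intros k k' Hk Hk'. eapply Q2_first; [|exact Hk|exact Hk']. intros; auto.
Qed.

Lemma pw_class2 x y n : central (comm y x) ->
  pw (x ⋅ y) n ≈ pw x n ⋅ pw y n ⋅ pw (comm y x) (tri n).
Proof. intro C. set (c := comm y x) in *.
  assert (Hyx : forall k, y ⋅ pw x k ≈ pw c k ⋅ pw x k ⋅ y).
  { induction k; simpl. gn; reflexivity.
    transitivity (c ⋅ (x ⋅ (y ⋅ pw x k))).
    { rewrite (opA y x), (comm_swap y x). fold c. rewrite !opA'. reflexivity. }
    rewrite IHk. assert (Cc := central_pw c k C).
    rewrite !opA'. apply op_compat; [reflexivity|]. rewrite opA, <- (Cc x), !opA'. reflexivity. }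
  induction n; simpl. rewrite !op1l; reflexivity.
  rewrite IHn, Nat.add_comm, pw_add. rewrite !opA'. apply op_compat; [reflexivity|].
  rewrite opA, Hyx. assert (Cc := central_pw c n C).
  rewrite !opA'. rewrite (Cc _). rewrite !opA'. reflexivity. Qed.

Lemma class2 (P : car H -> Prop) b m :
  (forall s s', P s -> P s' -> Q2 m (comm s s')) ->
  (forall s, P s -> pw s b ≈ un) -> Nat.divide m (tri b) ->
  forall t, sub P t -> pw t b ≈ un.
Proof. intros HQ HS Hd t Ht. induction Ht.
  - auto.
  - apply pw_un.
  - destruct (Q2_all P m HQ y x Ht2 Ht1) as [C Pm].
    rewrite pw_class2 by exact C. rewrite IHHt1, IHHt2, (pw_dvd _ _ _ Pm Hd), !op1l; reflexivity.
  - rewrite pw_iv, IHHt, iv1; reflexivity.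
  - rewrite <- H0; auto.
Qed.

End Gen.

Ltac gn := repeat (rewrite opA' || rewrite opVK || rewrite opK || rewrite opVl || rewrite opVr
   || rewrite op1l || rewrite op1r || rewrite ivM || rewrite ivK || rewrite iv1).
Arguments sub {H}.
Arguments central {H}.
Arguments comm {H}.
Arguments Q2 {H}.

Section Quot.
Variable H : SG.
Variable L : car H -> Prop.
Hypothesis Lp : forall x y, x ≈ y -> L x -> L y.
Hypothesis L1 : L un.
Hypothesis LM : forall x y, L x -> L y -> L (x ⋅ y).
Hypothesis LV : forall x, L x -> L (iv x).
Hypothesis LN : forall a x, L x -> L (a ⋅ x ⋅ iv a).

Lemma L_of_eqv x y : x ≈ y -> L (x ⋅ iv y).
Proof. intro E. eapply Lp; [symmetry; apply div_of_eq; exact E| exact L1]. Qed.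

Lemma Lp' x y : L x -> x ≈ y -> L y.
Proof. intros; eapply Lp; eauto. Qed.

Definition QG : SG.
refine (mkSG (car H) (fun x y => L (x ⋅ iv y)) (@op H) (@iv H) (@un H) _ _ _ _ _ _ _ _ _ _).
- intro x; apply L_of_eqv; reflexivity.
- intros x y E. apply (Lp' _ _ (LV _ E)). gn. reflexivity.
- intros x y z E F. apply (Lp' _ _ (LM _ _ E F)). gn. reflexivity.
- intros x x' y y' E F. apply (Lp' _ _ (LM _ _ (LN x _ F) E)). gn. reflexivity.
- intros x x' E. apply (Lp' _ _ (LN (iv x) _ (LV _ E))). gn. reflexivity.
- intros; apply L_of_eqv, opA.
- intros; apply L_of_eqv, op1l.
- intros; apply L_of_eqv, op1r.
- intros; apply L_of_eqv, opVl.
- intros; apply L_of_eqv, opVr.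
Defined.

Lemma QG_of (x y : car H) : @eqv H x y -> @eqv QG x y.
Proof. intros E. exact (L_of_eqv x y E). Qed.

End Quot.


Section Words.
Context {A : Type} (Rel : word A -> Prop).

Lemma peq_app_l x u v : peq Rel u v -> peq Rel (x ++ u) (x ++ v).
Proof. induction 1.
  - apply peq_refl.
  - apply peq_sym; auto.
  - eapply peq_trans; eauto.
  - pose proof (peq_cancel Rel (x ++ u) v b a) as P. rewrite <- !app_assoc in *. exact P.
  - pose proof (peq_rel Rel (x ++ u) v r H) as P. rewrite <- !app_assoc in *. exact P.
Qed.
Lemma peq_app_r y u v : peq Rel u v -> peq Rel (u ++ y) (v ++ y).
Proof. induction 1.
  - apply peq_refl.
  - apply peq_sym; auto.
  - eapply peq_trans; eauto.
  - pose proof (peq_cancel Rel u (v ++ y) b a) as P. rewrite <- !app_assoc in *. exact P.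
  - pose proof (peq_rel Rel u (v ++ y) r H) as P. rewrite <- !app_assoc in *. exact P.
Qed.
Lemma peq_app u u' v v' : peq Rel u u' -> peq Rel v v' -> peq Rel (u ++ v) (u' ++ v').
Proof. intros; eapply peq_trans; [apply peq_app_r; eauto| apply peq_app_l; eauto]. Qed.

Lemma winv_app (u v : word A) : winv (u ++ v) = winv v ++ winv u.
Proof. unfold winv. rewrite map_app, rev_app_distr. reflexivity. Qed.
Lemma winv_cons b a (u : word A) : winv ((b, a) :: u) = winv u ++ [(negb b, a)].
Proof. reflexivity. Qed.
Lemma winv_winv (u : word A) : winv (winv u) = u.
Proof. induction u as [|[b a] u IH]; [reflexivity|].
  rewrite winv_cons, winv_app, IH. simpl. rewrite Bool.negb_involutive. reflexivity. Qed.

Lemma peq_invr (u : word A) : peq Rel (u ++ winv u) [].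
Proof. induction u as [|[b a] u IH]; simpl. apply peq_refl.
  rewrite winv_cons, app_assoc.
  eapply peq_trans. apply (peq_app_l [(b,a)]). apply (peq_app_r [(negb b, a)]). exact IH.
  simpl. apply (peq_cancel Rel [] [] b a).
Qed.
Lemma peq_invl (u : word A) : peq Rel (winv u ++ u) [].
Proof. rewrite <- (winv_winv u) at 2. apply peq_invr. Qed.

Definition WordG : SG.
refine (mkSG (word A) (peq Rel) (@app _) winv [] (peq_refl Rel) (peq_sym Rel) (peq_trans Rel)
  peq_app _ _ _ _ peq_invl peq_invr).
- intros x x' E.
  apply peq_trans with (winv x ++ (x' ++ winv x')).
  + rewrite <- (app_nil_r (winv x)) at 1. apply peq_app_l, peq_sym, peq_invr.
  + rewrite app_assoc. apply peq_trans with ([] ++ winv x'); [|apply peq_refl].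
    apply peq_app_r. eapply peq_trans; [|apply peq_invl]. apply peq_app_l, peq_sym, E.
- intros; rewrite app_assoc; apply peq_refl.
- intros; apply peq_refl.
- intros; rewrite app_nil_r; apply peq_refl.
Defined.

End Words.


Section GL.
Variables (G : Type) (mul : G -> G -> G) (inv : G -> G) (one : G).
Hypothesis HG : is_group G mul inv one.

Lemma mA x y z : mul (mul x y) z = mul x (mul y z).
Proof. symmetry; apply (grp_assoc _ _ _ _ HG). Qed.
Lemma m1l x : mul one x = x. Proof. apply (grp_mul1l _ _ _ _ HG). Qed.
Lemma m1r x : mul x one = x. Proof. apply (grp_mul1r _ _ _ _ HG). Qed.
Lemma mVl x : mul (inv x) x = one. Proof. apply (grp_mulVl _ _ _ _ HG). Qed.
Lemma mVr x : mul x (inv x) = one. Proof. apply (grp_mulVr _ _ _ _ HG). Qed.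
Lemma mK x y : mul x (mul (inv x) y) = y. Proof. rewrite <- mA, mVr, m1l; auto. Qed.
Lemma mVK x y : mul (inv x) (mul x y) = y. Proof. rewrite <- mA, mVl, m1l; auto. Qed.
Lemma m_uniq x y : mul x y = one -> y = inv x.
Proof. intro E. rewrite <- (mVK x y), E, m1r; auto. Qed.
Lemma invI x : inv (inv x) = x. Proof. symmetry; apply m_uniq, mVl. Qed.
Lemma invM x y : inv (mul x y) = mul (inv y) (inv x).
Proof. symmetry; apply m_uniq. rewrite mA, mK, mVr; auto. Qed.
Lemma inv1 : inv one = one. Proof. symmetry; apply m_uniq, m1l. Qed.

Ltac gs := unfold gconj, gcomm in *; repeat (rewrite mA || rewrite mVK || rewrite mK || rewrite mVl
  || rewrite mVr || rewrite m1l || rewrite m1r || rewrite invM || rewrite invI || rewrite inv1).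

Notation der := (derived G mul inv one).
Notation cj := (gconj G mul inv).
Notation cm := (gcomm G mul inv).
Notation gp := (gpow G mul one).

Lemma dr_one i : der i one. Proof. destruct i; constructor. Qed.
Lemma dr_mul i x y : der i x -> der i y -> der i (mul x y).
Proof. destruct i; intros; constructor; auto. Qed.
Lemma dr_inv i x : der i x -> der i (inv x).
Proof. destruct i; intros; constructor; auto. Qed.
Lemma der_conj i a x : der i x -> der i (cj a x).
Proof. induction 1.
  - constructor.
  - replace (cj a (cm a0 b)) with (cm (cj a a0) (cj a b)) by (gs; reflexivity). constructor; auto.
  - replace (cj a one) with one by (gs; reflexivity). constructor.
  - replace (cj a (mul x y)) with (mul (cj a x) (cj a y)) by (gs; reflexivity). constructor; auto.
  - replace (cj a (inv x)) with (inv (cj a x)) by (gs; reflexivity). constructor; auto.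
Qed.
Lemma der_comm_l i x y : der i x -> der i (cm x y).
Proof. intro D. replace (cm x y) with (mul x (cj y (inv x))) by (gs; reflexivity).
  apply dr_mul; auto. apply der_conj, dr_inv; auto. Qed.
Lemma der_comm_r i x y : der i y -> der i (cm x y).
Proof. intro D. replace (cm x y) with (mul (cj x y) (inv y)) by (gs; reflexivity).
  apply dr_mul; auto. apply der_conj; auto. apply dr_inv; auto. Qed.
Lemma der_comm_lr i x y : der i x \/ der i y -> der i (cm x y).
Proof. intros [D|D]; [apply der_comm_l|apply der_comm_r]; auto. Qed.
Lemma der_S i x : der (S i) x -> der i x.
Proof. revert x; induction i; intros x D. constructor.
  remember (S (S i)) as j eqn:Ej. revert Ej. induction D; intro Ej; try discriminate.
  - injection Ej as ->. apply der_comm_l; auto.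
  - apply dr_one.
  - apply dr_mul; auto.
  - apply dr_inv; auto.
Qed.
Lemma der_gp i x k : der i x -> der i (gp x k).
Proof. intro D; induction k; simpl. apply dr_one. apply dr_mul; auto. Qed.
Lemma der_comm2 i x y : der i x -> der i y -> der (S i) (cm x y).
Proof. constructor; auto. Qed.

End GL.


Section Model.
Variables (G : Type) (mul : G -> G -> G) (inv : G -> G) (one : G).
Hypothesis HG : is_group G mul inv one.
Notation der := (derived G mul inv one).
Notation cj := (gconj G mul inv).
Notation cm := (gcomm G mul inv).
Notation gp := (gpow G mul one).

Ltac gs := unfold gconj, gcomm in *; repeat (rewrite (mA _ _ _ _ HG) || rewrite (mVK _ _ _ _ HG)
  || rewrite (mK _ _ _ _ HG) || rewrite (mVl _ _ _ _ HG)
  || rewrite (mVr _ _ _ _ HG) || rewrite (m1l _ _ _ _ HG) || rewrite (m1r _ _ _ _ HG)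
  || rewrite (invM _ _ _ _ HG) || rewrite (invI _ _ _ _ HG) || rewrite (inv1 _ _ _ _ HG)).

Variable H : SG.
Variable lt : G -> G -> car H.
Variable act : G -> car H -> car H.
Hypothesis act_mor : forall a x y, x ≈ y -> act a x ≈ act a y.
Hypothesis act_op : forall a x y, act a (x ⋅ y) ≈ act a x ⋅ act a y.
Hypothesis act_iv : forall a x, act a (iv x) ≈ iv (act a x).
Hypothesis act_lt : forall a x y, act a (lt x y) ≈ lt (cj a x) (cj a y).
Hypothesis act_mul : forall a b t, act (mul a b) t ≈ act a (act b t).
Hypothesis act_one : forall t, act one t ≈ t.
Hypothesis Lr : forall g g' h, lt (mul g g') h ≈ lt (cj g g') (cj g h) ⋅ lt g h.
Hypothesis Rr : forall g h h', lt g (mul h h') ≈ lt g h ⋅ lt (cj h g) (cj h h').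
Hypothesis gen_ind : forall P : car H -> Prop, (forall x y, x ≈ y -> P x -> P y) -> P un ->
  (forall a b, P (lt a b)) -> (forall x y, P x -> P y -> P (x ⋅ y)) -> (forall x, P x -> P (iv x)) ->
  forall t, P t.

Instance act_Proper a : Proper (eqv ==> eqv) (act a).
Proof. intros x y E; auto. Qed.

Lemma idem_un (x : car H) : x ≈ x ⋅ x -> x ≈ un.
Proof. intro E. apply (op_cancel_l H x). rewrite op1r. symmetry; auto. Qed.

Lemma cj1 x : cj one x = x. Proof. gs; reflexivity. Qed.

Lemma lt1l h : lt one h ≈ un.
Proof. apply idem_un. rewrite <- (m1l _ _ _ _ HG one) at 1. rewrite Lr, !cj1. reflexivity. Qed.
Lemma lt1r g : lt g one ≈ un.
Proof. apply idem_un. rewrite <- (m1l _ _ _ _ HG one) at 1. rewrite Rr, !cj1. reflexivity. Qed.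

Lemma act_un a : act a un ≈ un.
Proof. apply idem_un. rewrite <- act_op, op1l. reflexivity. Qed.

Lemma act_pw a x n : act a (pw x n) ≈ pw (act a x) n.
Proof. induction n; simpl. apply act_un. rewrite act_op, IHn; reflexivity. Qed.

Lemma CJ_letter m n x y :
  lt m n ⋅ lt x y ⋅ iv (lt m n) ≈ lt (cj (cm m n) x) (cj (cm m n) y).
Proof.
  set (m' := cj (inv (mul n m)) x). set (n' := cj (inv (mul n m)) y).
  set (A := lt (cj m m') (cj m n)).
  set (B := lt (cj (cj m n) (cj m m')) (cj (cj m n) (cj m n'))).
  set (C := lt m n). set (D := lt (cj n m) (cj n n')).
  set (E := lt (cj (cj n m) (cj n m')) (cj (cj n m) (cj n n'))).
  assert (W1 : lt (mul m m') (mul n n') ≈ A ⋅ B ⋅ (C ⋅ D)).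
  { rewrite Lr. replace (cj m (mul n n')) with (mul (cj m n) (cj m n')) by (gs; reflexivity).
    rewrite Rr, Rr. reflexivity. }
  assert (W2 : lt (mul m m') (mul n n') ≈ A ⋅ C ⋅ (E ⋅ D)).
  { rewrite Rr, Lr. replace (cj n (mul m m')) with (mul (cj n m) (cj n m')) by (gs; reflexivity).
    rewrite Lr. reflexivity. }
  assert (BC : B ⋅ C ≈ C ⋅ E).
  { apply (op_cancel_l H A), (op_cancel_r H D).
    transitivity (A ⋅ B ⋅ (C ⋅ D)). { gn; reflexivity. } rewrite <- W1, W2. gn. reflexivity. }
  assert (EE : E = lt x y).
  { unfold E, m', n'. f_equal; gs; reflexivity. }
  assert (BB : B = lt (cj (cm m n) x) (cj (cm m n) y)).
  { unfold B, m', n'. f_equal; gs; reflexivity. }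
  rewrite <- EE, <- BB, <- BC. gn. reflexivity.
Qed.

Lemma CJ m n t : lt m n ⋅ t ⋅ iv (lt m n) ≈ act (cm m n) t.
Proof. revert t. apply gen_ind.
  - intros x y E P. rewrite <- E; auto.
  - rewrite act_un, op1r, opVr. reflexivity.
  - intros a b. rewrite CJ_letter, act_lt. reflexivity.
  - intros x y P Q. rewrite act_op, <- P, <- Q. gn. reflexivity.
  - intros x P. rewrite act_iv, <- P. gn. reflexivity.
Qed.

Lemma CJ' m n t : iv (lt m n) ⋅ t ⋅ lt m n ≈ act (inv (cm m n)) t.
Proof. rewrite <- (act_one (iv (lt m n) ⋅ t ⋅ lt m n)).
  rewrite <- (mVl _ _ _ _ HG (cm m n)), act_mul. apply act_mor.
  rewrite <- CJ. gn. reflexivity. Qed.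

Lemma G1 a x y : act a (lt x y) ≈ lt a (cj x y) ⋅ lt x y ⋅ iv (lt a y).
Proof.
  assert (E1 : lt (mul a x) y ≈ act a (lt x y) ⋅ lt a y) by (rewrite Lr, act_lt; reflexivity).
  assert (E2 : lt (mul a x) y ≈ lt a (cj x y) ⋅ lt x y).
  { replace (mul a x) with (mul x (cj (inv x) a)) by (gs; reflexivity).
    rewrite Lr. replace (cj x (cj (inv x) a)) with a by (gs; reflexivity). reflexivity. }
  rewrite <- E2, E1. gn. reflexivity.
Qed.

Lemma Dk k x y : lt k (cm x y) ≈ act k (lt x y) ⋅ iv (lt x y).
Proof.
  assert (E1 : lt k (cj x y) ≈ lt k (cm x y) ⋅ act (cm x y) (lt k y)).
  { replace (cj x y) with (mul (cm x y) y) by (gs; reflexivity). rewrite Rr, act_lt. reflexivity. }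
  rewrite G1, E1, <- CJ. gn. reflexivity.
Qed.


Lemma act_lt' a x y : lt (cj a x) (cj a y) ≈ act a (lt x y).
Proof. symmetry; apply act_lt. Qed.
Lemma Dk' k x y : act k (lt x y) ≈ lt k (cm x y) ⋅ lt x y.
Proof. rewrite Dk. gn. reflexivity. Qed.

Section Step.
Variable i : nat.
Variable e : nat.
Hypothesis He : forall x, gp x e = one.
Hypothesis HL : forall x y, der (S i) x \/ der (S i) y -> lt x y ≈ un.

Lemma F2 a t : der (S i) a -> act a t ≈ t.
Proof. intro Da. revert t. apply gen_ind.
  - intros x y E P. rewrite <- E; auto.
  - apply act_un.
  - intros x y. rewrite G1, (HL a (cj x y)), (HL a y) by auto. gn. reflexivity.
  - intros x y P Q. rewrite act_op, P, Q. reflexivity.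
  - intros x P. rewrite act_iv, P. reflexivity.
Qed.

Lemma Zc c d : der i c -> der i d -> central (lt c d).
Proof. intros Dc Dd t. apply (op_cancel_r H (iv (lt c d))).
  rewrite CJ, F2 by (apply der_comm2; auto). gn. reflexivity. Qed.

Lemma Zhom a a' d : der i a' -> der i d -> lt (mul a a') d ≈ lt a' d ⋅ lt a d.
Proof. intros Da Dd. rewrite Lr, act_lt', Dk', (HL a (cm a' d)) by (right; apply der_comm2; auto).
  rewrite op1l. reflexivity. Qed.

Lemma Zpow a d : der i a -> der i d -> pw (lt a d) e ≈ un.
Proof. intros Da Dd.
  assert (K : forall k, lt (gp a k) d ≈ pw (lt a d) k).
  { induction k; simpl. apply lt1l. rewrite Zhom by (auto; apply der_gp; auto).
    rewrite IHk, <- pw_succ_r. reflexivity. }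
  rewrite <- K, He. apply lt1l. Qed.

Variable m : nat.
Hypothesis Hm : (i = 0 /\ m = 1) \/ m = e.

Lemma Zm c x y : der i c -> der i x \/ der i y -> Q2 m (lt c (cm x y)).
Proof. intros Dc Dxy. split. apply Zc; auto. apply der_comm_lr; auto.
  destruct Hm as [[-> ->]| ->].
  - rewrite pw_one. apply HL. right. apply der_comm2; constructor.
  - apply Zpow; auto. apply der_comm_lr; auto.
Qed.

Definition PK (t : car H) := exists x y, t = lt x y /\ (der i x \/ der i y).

Lemma H1 s s' : PK s -> PK s' -> Q2 m (comm s s').
Proof. intros [x [y [-> Dxy]]] [x' [y' [-> Dxy']]].
  eapply Q2_proper; [|apply (Zm (cm x y) x' y'); auto; apply der_comm_lr; auto].
  unfold comm. rewrite CJ, <- Dk. reflexivity. Qed.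

Lemma lt_cj_self n X : der i n -> der i X -> lt n (cj n X) ≈ lt n X.
Proof. intros Dn DX. replace (lt n (cj n X)) with (lt (cj n n) (cj n X)) by (f_equal; gs; reflexivity).
  rewrite act_lt', Dk', HL by (right; apply der_comm2; auto). rewrite op1l; reflexivity. Qed.

Variable j : nat.
Hypothesis Hd1 : Nat.divide m (j * tri e).

Lemma H2a n g : der i n -> pw (lt n g) (j * e) ≈ un.
Proof. intro Dn. set (z := lt n (cm n g)). set (f := lt n g).
  assert (A1 : forall k, lt n (cm (gp n k) g) ≈ pw z k).
  { induction k; simpl.
    - replace (cm one g) with one by (gs; reflexivity). apply lt1r.
    - replace (cm (mul n (gp n k)) g) with (mul (cj n (cm (gp n k) g)) (cm n g)) by (gs; reflexivity).
      rewrite Rr, act_lt', Dk'. rewrite (HL _ (cm n _)) by (right; apply der_comm2; auto;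
        apply der_comm_l; auto).
      rewrite lt_cj_self by (auto; apply der_comm_l, der_gp; auto).
      rewrite IHk, op1l. fold z. symmetry. exact (pw_succ_r H z k). }
  assert (A2 : forall k, pw z (tri k) ⋅ pw f k ≈ lt (gp n k) g).
  { induction k; simpl.
    - rewrite op1l, lt1l. reflexivity.
    - rewrite Lr, act_lt', Dk', A1, <- IHk, pw_add. fold f.
      change (f ⋅ pw f k) with (pw f (S k)). rewrite (pw_succ_r H f k). gn. reflexivity. }
  assert (A3 : pw f e ≈ iv (pw z (tri e))).
  { apply uniq_inv. rewrite A2, He. apply lt1l. }
  rewrite Nat.mul_comm, pw_mul, A3, pw_iv, <- pw_mul.
  rewrite (pw_dvd H z m); [apply iv1| |].
  - destruct (Zm n n g Dn (or_introl Dn)) as [_ P]. exact P.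
  - rewrite Nat.mul_comm. exact Hd1.
Qed.

Lemma H2b n g : der i n -> pw (lt g n) (j * e) ≈ un.
Proof. intro Dn. set (w := lt n (cm g n)). set (h := lt g n).
  assert (Wc : central w) by (apply Zc; auto; apply der_comm_r; auto).
  assert (A1 : forall k, lt n (cm g (gp n k)) ≈ pw w k).
  { induction k; simpl.
    - replace (cm g one) with one by (gs; reflexivity). apply lt1r.
    - replace (cm g (mul n (gp n k))) with (mul (cm g n) (cj n (cm g (gp n k)))) by (gs; reflexivity).
      rewrite Rr, act_lt', Dk'. rewrite (HL _ (cm n _)) by (right; apply der_comm2; auto;
        apply der_conj, der_comm_r, der_gp; auto).
      rewrite lt_cj_self by (auto; apply der_comm_r, der_gp; auto).
      rewrite IHk, op1l. reflexivity. }
  assert (A2 : forall k, lt g (gp n k) ≈ pw h k ⋅ pw w (tri k)).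
  { induction k; simpl.
    - rewrite op1l, lt1r. reflexivity.
    - rewrite Rr, act_lt', Dk', A1, IHk, pw_add. fold h.
      rewrite !opA. apply op_compat; [|reflexivity].
      rewrite !opA'. apply op_compat; [reflexivity|]. apply (central_pw H w k Wc). }
  assert (A3 : pw h e ≈ iv (pw w (tri e))).
  { apply uniq_inv'. rewrite <- A2, He. apply lt1r. }
  rewrite Nat.mul_comm, pw_mul, A3, pw_iv, <- pw_mul.
  rewrite (pw_dvd H w m); [apply iv1| |].
  - destruct (Zm n g n Dn (or_intror Dn)) as [_ P]. exact P.
  - rewrite Nat.mul_comm. exact Hd1.
Qed.

Hypothesis Hd2 : Nat.divide m (tri (j * e)).

Lemma step_model t : sub PK t -> pw t (j * e) ≈ un.
Proof. apply (class2 H PK (j * e) m); auto.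
  - apply H1.
  - intros s [x [y [-> [Dx|Dy]]]]. apply H2a; auto. apply H2b; auto.
Qed.

End Step.

End Model.


Section Tens.
Variables (G : Type) (mul : G -> G -> G) (inv : G -> G) (one : G).
Hypothesis HG : is_group G mul inv one.
Notation der := (derived G mul inv one).
Notation cj := (gconj G mul inv).
Notation cm := (gcomm G mul inv).
Notation gp := (gpow G mul one).

Ltac gs := unfold gconj, gcomm in *; repeat (rewrite (mA _ _ _ _ HG) || rewrite (mVK _ _ _ _ HG)
  || rewrite (mK _ _ _ _ HG) || rewrite (mVl _ _ _ _ HG)
  || rewrite (mVr _ _ _ _ HG) || rewrite (m1l _ _ _ _ HG) || rewrite (m1r _ _ _ _ HG)
  || rewrite (invM _ _ _ _ HG) || rewrite (invI _ _ _ _ HG) || rewrite (inv1 _ _ _ _ HG)).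

Definition TR := tensor_rel G mul inv.
Definition T : SG := WordG TR.
Definition ltT (x y : G) : car T := [(true, (x, y))].
Definition actT (a : G) (w : word (G * G)) : word (G * G) :=
  map (fun p => (fst p, (cj a (fst (snd p)), cj a (snd (snd p))))) w.

Lemma actT_app a u v : actT a (u ++ v) = actT a u ++ actT a v.
Proof. apply map_app. Qed.
Lemma actT_winv a u : actT a (winv u) = winv (actT a u).
Proof. unfold actT, winv. rewrite map_rev, !map_map. reflexivity. Qed.
Lemma actT_mul a b w : actT (mul a b) w = actT a (actT b w).
Proof. unfold actT. rewrite map_map. apply map_ext. intros [c [x y]]; simpl. f_equal; f_equal; gs; reflexivity. Qed.
Lemma actT_one w : actT one w = w.
Proof. unfold actT. rewrite <- (map_id w) at 2. apply map_ext. intros [c [x y]]; simpl. f_equal; f_equal; gs; reflexivity. Qed.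

Lemma TR_act a r : TR r -> TR (actT a r).
Proof. intros [[g [g' [h ->]]]|[g [h [h' ->]]]].
  - left. exists (cj a g), (cj a g'), (cj a h). unfold actT; simpl.
    replace (cj a (mul g g')) with (mul (cj a g) (cj a g')) by (gs; reflexivity).
    replace (cj a (cj g g')) with (cj (cj a g) (cj a g')) by (gs; reflexivity).
    replace (cj a (cj g h)) with (cj (cj a g) (cj a h)) by (gs; reflexivity). reflexivity.
  - right. exists (cj a g), (cj a h), (cj a h'). unfold actT; simpl.
    replace (cj a (mul h h')) with (mul (cj a h) (cj a h')) by (gs; reflexivity).
    replace (cj a (cj h g)) with (cj (cj a h) (cj a g)) by (gs; reflexivity).
    replace (cj a (cj h h')) with (cj (cj a h) (cj a h')) by (gs; reflexivity). reflexivity.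
Qed.

Lemma actT_peq a u v : peq TR u v -> peq TR (actT a u) (actT a v).
Proof. induction 1.
  - apply peq_refl.
  - apply peq_sym; auto.
  - eapply peq_trans; eauto.
  - rewrite !actT_app. apply (peq_cancel TR (actT a u) (actT a v) b).
  - rewrite !actT_app. apply peq_rel. apply TR_act; auto.
Qed.

Lemma TLr g g' h : @eqv T (ltT (mul g g') h) (ltT (cj g g') (cj g h) ⋅ ltT g h).
Proof. assert (E : @eqv T (ltT (mul g g') h ⋅ iv (ltT g h) ⋅ iv (ltT (cj g g') (cj g h))) un).
  { assert (Hr : TR [(true,(mul g g',h)); (false,(g,h)); (false,(cj g g', cj g h))])
      by (left; exists g, g', h; reflexivity).
    pose proof (peq_rel TR [] [] _ Hr) as P. simpl in P. exact P. }
  apply eq_of_div in E. rewrite <- E. gn. reflexivity. Qed.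
Lemma TRr g h h' : @eqv T (ltT g (mul h h')) (ltT g h ⋅ ltT (cj h g) (cj h h')).
Proof. assert (E : @eqv T (ltT g (mul h h') ⋅ iv (ltT (cj h g) (cj h h')) ⋅ iv (ltT g h)) un).
  { assert (Hr : TR [(true,(g,mul h h')); (false,(cj h g, cj h h')); (false,(g,h))])
      by (right; exists g, h, h'; reflexivity).
    pose proof (peq_rel TR [] [] _ Hr) as P. simpl in P. exact P. }
  apply eq_of_div in E. rewrite <- E. gn. reflexivity. Qed.

Lemma list_ind_T (P : word (G * G) -> Prop) :
  P [] -> (forall a b w, P w -> P ((true, (a, b)) :: w)) -> (forall a b w, P w -> P ((false, (a, b)) :: w)) ->
  forall w, P w.
Proof. intros H0 H1 H2 w. induction w as [|[[|] [a b]] w IH]; auto. Qed.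

Lemma T_act_mor a (x y : car T) : x ≈ y -> @eqv T (actT a x) (actT a y).
Proof. apply actT_peq. Qed.
Lemma T_act_op a (x y : car T) : @eqv T (actT a (x ⋅ y)) (@op T (actT a x) (actT a y)).
Proof. simpl. rewrite actT_app. apply peq_refl. Qed.
Lemma T_act_iv a (x : car T) : @eqv T (actT a (iv x)) (@iv T (actT a x)).
Proof. simpl. rewrite actT_winv. apply peq_refl. Qed.
Lemma T_act_lt a x y : @eqv T (actT a (ltT x y)) (ltT (cj a x) (cj a y)).
Proof. apply peq_refl. Qed.
Lemma T_act_mul a b (t : car T) : @eqv T (actT (mul a b) t) (actT a (actT b t)).
Proof. rewrite actT_mul. apply peq_refl. Qed.
Lemma T_act_one (t : car T) : @eqv T (actT one t) t.
Proof. rewrite actT_one. apply peq_refl. Qed.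
Lemma T_gen_ind (P : car T -> Prop) : (forall x y, x ≈ y -> P x -> P y) -> P un ->
  (forall a b, P (ltT a b)) -> (forall x y, P x -> P y -> P (x ⋅ y)) -> (forall x, P x -> P (iv x)) ->
  forall t, P t.
Proof. intros Pp P0 P1 P2 P3. apply list_ind_T; auto.
  - intros a b w Hw. exact (P2 (ltT a b) w (P1 a b) Hw).
  - intros a b w Hw. exact (P2 (iv (ltT a b)) w (P3 _ (P1 a b)) Hw).
Qed.

Definition PL (i : nat) (t : car T) := exists x y, t = ltT x y /\ (der i x \/ der i y).
Definition Lsub i := @sub T (PL i).

Lemma Lsub_act i a x : Lsub i x -> Lsub i (actT a x).
Proof. induction 1.
  - destruct H as [p [q [-> D]]]. apply sb_base. exists (cj a p), (cj a q). split. reflexivity.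
    destruct D; [left|right]; apply der_conj; auto.
  - apply sb_un.
  - change (Lsub i (actT a (x ++ y))). rewrite actT_app. apply (sb_op T _ _ _ IHsub1 IHsub2).
  - change (Lsub i (actT a (winv x))). rewrite actT_winv. apply (sb_iv T _ _ IHsub).
  - eapply sb_eqv; [|exact IHsub]. apply actT_peq; auto.
Qed.

Lemma Lsub_norm i (a x : car T) : Lsub i x -> Lsub i (a ⋅ x ⋅ iv a) /\ Lsub i (iv a ⋅ x ⋅ a).
Proof. revert x. revert a.
  apply (T_gen_ind (fun a => forall x, Lsub i x -> Lsub i (a ⋅ x ⋅ iv a) /\ Lsub i (iv a ⋅ x ⋅ a))).
  - intros a b E P x Hx. destruct (P x Hx) as [P1 P2]. split.
    + eapply sb_eqv; [|exact P1]. rewrite E. reflexivity.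
    + eapply sb_eqv; [|exact P2]. rewrite E. reflexivity.
  - intros x Hx. split; (eapply sb_eqv; [|exact Hx]); gn; reflexivity.
  - intros a b x Hx. split.
    + eapply sb_eqv. symmetry. apply (CJ G mul inv one HG T ltT actT T_act_mor T_act_op T_act_iv T_act_lt
        TLr TRr T_gen_ind). apply Lsub_act; auto.
    + eapply sb_eqv. symmetry. apply (CJ' G mul inv one HG T ltT actT T_act_mor T_act_op T_act_iv T_act_lt
        T_act_mul T_act_one TLr TRr T_gen_ind). apply Lsub_act; auto.
  - intros a b Pa Pb x Hx. split.
    + eapply sb_eqv; [|apply (proj1 (Pa _ (proj1 (Pb x Hx))))]. gn; reflexivity.
    + eapply sb_eqv; [|apply (proj2 (Pb _ (proj2 (Pa x Hx))))]. gn; reflexivity.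
  - intros a Pa x Hx. split.
    + eapply sb_eqv; [|apply (proj2 (Pa x Hx))]. gn; reflexivity.
    + eapply sb_eqv; [|apply (proj1 (Pa x Hx))]. gn; reflexivity.
Qed.

Section Q.
Variable i : nat.
Definition Li := Lsub (S i).
Lemma Li_p (x y : car T) : x ≈ y -> Li x -> Li y.
Proof. intros E Hx. eapply sb_eqv; eauto. Qed.
Definition Q : SG := QG T Li Li_p (sb_un T _) (sb_op T _) (sb_iv T _)
  (fun a x Hx => proj1 (Lsub_norm (S i) a x Hx)).

Lemma Q_of (x y : car T) : x ≈ y -> @eqv Q x y.
Proof. apply QG_of. Qed.

Lemma Q_act_mor a (x y : car Q) : x ≈ y -> @eqv Q (actT a x) (actT a y).
Proof. intro E. simpl in *. unfold Li. eapply sb_eqv; [|apply (Lsub_act _ a _ E)].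
  simpl. rewrite actT_app, actT_winv. apply peq_refl. Qed.
Lemma Q_act_op a (x y : car Q) : @eqv Q (actT a (x ⋅ y)) (@op Q (actT a x) (actT a y)).
Proof. apply Q_of. apply T_act_op. Qed.
Lemma Q_act_iv a (x : car Q) : @eqv Q (actT a (iv x)) (@iv Q (actT a x)).
Proof. apply Q_of. apply T_act_iv. Qed.
Lemma Q_act_lt a x y : @eqv Q (actT a (ltT x y)) (ltT (cj a x) (cj a y)).
Proof. apply Q_of. apply T_act_lt. Qed.
Lemma QLr g g' h : @eqv Q (ltT (mul g g') h) (@op Q (ltT (cj g g') (cj g h)) (ltT g h)).
Proof. apply Q_of. apply TLr. Qed.
Lemma QRr g h h' : @eqv Q (ltT g (mul h h')) (@op Q (ltT g h) (ltT (cj h g) (cj h h'))).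
Proof. apply Q_of. apply TRr. Qed.
Lemma Q_gen_ind (P : car Q -> Prop) : (forall x y, x ≈ y -> P x -> P y) -> P un ->
  (forall a b, P (ltT a b)) -> (forall x y, P x -> P y -> P (x ⋅ y)) -> (forall x, P x -> P (iv x)) ->
  forall t, P t.
Proof. intros Pp P0 P1 P2 P3. apply list_ind_T; auto.
  - intros a b w Hw. exact (P2 (ltT a b) w (P1 a b) Hw).
  - intros a b w Hw. exact (P2 (iv (ltT a b)) w (P3 _ (P1 a b)) Hw).
Qed.
Lemma QHL x y : der (S i) x \/ der (S i) y -> @eqv Q (ltT x y) un.
Proof. intro D. simpl. unfold Li. apply sb_base. exists x, y. split; auto. Qed.

Lemma pw_QT (t : car T) n : @pw Q t n = @pw T t n.
Proof. induction n; simpl; [reflexivity| rewrite IHn; reflexivity]. Qed.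

Lemma step_T e (He : forall x, gp x e = one) m (Hm : (i = 0 /\ m = 1) \/ m = e) j
  (Hd1 : Nat.divide m (j * tri e)) (Hd2 : Nat.divide m (tri (j * e))) :
  forall t, Lsub i t -> Lsub (S i) (pw t (j * e)).
Proof. intros t Ht.
  assert (Ht' : sub (PK G mul inv one Q ltT i) t).
  { induction Ht.
    - apply sb_base. exact H.
    - exact (sb_un Q _).
    - exact (sb_op Q _ _ _ IHHt1 IHHt2).
    - exact (sb_iv Q _ _ IHHt).
    - eapply sb_eqv; [apply Q_of; exact H|exact IHHt]. }
  pose proof (step_model G mul inv one HG Q ltT actT Q_act_mor Q_act_op Q_act_iv Q_act_lt QLr QRr Q_gen_ind
    i e He QHL m Hm j Hd1 Hd2 t Ht') as R.
  simpl in R. unfold Li in R. rewrite pw_QT, app_nil_r in R. exact R.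
Qed.
End Q.


Lemma Lsub0_all t : Lsub 0 t.
Proof. revert t. apply T_gen_ind.
  - intros x y E Hx. eapply sb_eqv; eauto.
  - apply sb_un.
  - intros a b. apply sb_base. exists a, b. split; [reflexivity| left; constructor].
  - intros; apply sb_op; auto.
  - intros; apply sb_iv; auto.
Qed.

Lemma Lsub_triv d (Hd : forall x, der d x -> x = one) t : Lsub d t -> @eqv T t un.
Proof. induction 1.
  - destruct H as [p [q [-> [D|D]]]]; apply Hd in D; subst.
    + apply (lt1l G mul inv one HG T ltT TLr).
    + apply (lt1r G mul inv one HG T ltT TRr).
  - reflexivity.
  - rewrite IHsub1, IHsub2. apply op1l.
  - rewrite IHsub. apply iv1.
  - rewrite <- H; auto.
Qed.

Lemma iterate (f jf mf : nat -> nat) e (He : forall x, gp x e = one) :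
  f 0 = 1 -> (forall i, f (S i) = f i * (jf i * e)) ->
  (forall i, (i = 0 /\ mf i = 1) \/ mf i = e) ->
  (forall i, Nat.divide (mf i) (jf i * tri e)) -> (forall i, Nat.divide (mf i) (tri (jf i * e))) ->
  forall i t, Lsub i (pw t (f i)).
Proof. intros F0 FS Hm Hd1 Hd2 i. induction i; intro t.
  - apply Lsub0_all.
  - pose proof (step_T i e He (mf i) (Hm i) (jf i) (Hd1 i) (Hd2 i) _ (IHi t)) as R.
    eapply sb_eqv; [|exact R]. rewrite FS. symmetry. apply pw_mul.
Qed.

Lemma wpow_pw (w : word (G * G)) n : wpow w n = @pw T w n.
Proof. induction n; simpl; [reflexivity| rewrite IHn; reflexivity]. Qed.

Lemma tensor_main (f jf mf : nat -> nat) e (He : forall x, gp x e = one) :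
  f 0 = 1 -> (forall i, f (S i) = f i * (jf i * e)) ->
  (forall i, (i = 0 /\ mf i = 1) \/ mf i = e) ->
  (forall i, Nat.divide (mf i) (jf i * tri e)) -> (forall i, Nat.divide (mf i) (tri (jf i * e))) ->
  forall d, (forall x, der d x -> x = one) -> tensor_exp_dvd G mul inv (f d).
Proof. intros F0 FS Hm Hd1 Hd2 d Hd w. rewrite wpow_pw.
  apply (Lsub_triv d Hd). eapply iterate; eauto. Qed.

End Tens.


Section Schur.
Variables (G : Type) (mul : G -> G -> G) (inv : G -> G) (one : G).
Hypothesis HG : is_group G mul inv one.
Notation cj := (gconj G mul inv).
Notation cm := (gcomm G mul inv).
Notation ev := (eval G mul inv one).

Ltac gs := unfold gconj, gcomm in *; repeat (rewrite (mA _ _ _ _ HG) || rewrite (mVK _ _ _ _ HG)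
  || rewrite (mK _ _ _ _ HG) || rewrite (mVl _ _ _ _ HG)
  || rewrite (mVr _ _ _ _ HG) || rewrite (m1l _ _ _ _ HG) || rewrite (m1r _ _ _ _ HG)
  || rewrite (invM _ _ _ _ HG) || rewrite (invI _ _ _ _ HG) || rewrite (inv1 _ _ _ _ HG)).

Definition F : SG := WordG (@no_rel G).

Lemma ev_app u v : ev (u ++ v) = mul (ev u) (ev v).
Proof. induction u as [|[b a] u IH]; simpl. gs; reflexivity. rewrite IH. gs; reflexivity. Qed.
Lemma ev_winv u : ev (winv u) = inv (ev u).
Proof. induction u as [|[b a] u IH]; simpl. gs; reflexivity.
  rewrite winv_cons, ev_app, IH. simpl. destruct b; simpl; gs; reflexivity. Qed.
Lemma ev_peq u v : peq no_rel u v -> ev u = ev v.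
Proof. induction 1; auto. congruence. rewrite !ev_app. simpl. destruct b; simpl; gs; reflexivity.
  destruct H. Qed.

Definition FR := in_FR G mul inv one.

Lemma wcomm_comm (u v : word G) : wcomm u v = @comm F u v.
Proof. unfold wcomm, comm. simpl. rewrite !app_assoc. reflexivity. Qed.

Lemma FR_p (x y : car F) : x ≈ y -> FR x -> FR y.
Proof. intros E Hx. eapply gen_peq; eauto. Qed.
Lemma FR_base a r : ev r = one -> FR (@comm F a r).
Proof. intro Er. rewrite <- wcomm_comm. apply gen_base. exists a, r. auto. Qed.
Lemma FR_norm (a x : car F) : FR x -> FR (a ⋅ x ⋅ iv a).
Proof. induction 1.
  - destruct H as [u [r [Er ->]]]. rewrite wcomm_comm.
    apply (FR_p (comm (a ⋅ u) r ⋅ iv (comm a r))).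
    + unfold comm. gn. reflexivity.
    + apply (gen_app _ _ _ _ (FR_base _ _ Er) (gen_inv _ _ _ (FR_base _ _ Er))).
  - change (FR (a ⋅ @un F ⋅ iv a)). apply (FR_p un). gn; reflexivity. apply gen_nil.
  - change (FR (a ⋅ (@op F u v) ⋅ iv a)). apply (FR_p ((a ⋅ u ⋅ iv a) ⋅ (a ⋅ v ⋅ iv a))). gn; reflexivity. exact (gen_app _ _ _ _ IHin_gen1 IHin_gen2).
  - change (FR (a ⋅ (@iv F u) ⋅ iv a)). apply (FR_p (iv (a ⋅ u ⋅ iv a))). gn; reflexivity. exact (gen_inv _ _ _ IHin_gen).
  - apply (FR_p (a ⋅ u ⋅ iv a)). assert (E : @eqv F u v) by exact H. rewrite E. reflexivity. exact IHin_gen.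
Qed.

Definition QF : SG := QG F FR FR_p (gen_nil _ _) (gen_app _ _) (gen_inv _ _) FR_norm.

Lemma QF_of (x y : car F) : x ≈ y -> @eqv QF x y.
Proof. apply QG_of. Qed.

Lemma R_central (r : car QF) : ev r = one -> central r.
Proof. intros Er a. change (FR (@op F (@op F r a) (@iv F (@op F a r)))).
  apply (FR_p (@iv F (@comm F a r))).
  - unfold comm. gn. reflexivity.
  - apply gen_inv, FR_base; auto.
Qed.

Lemma comm_cr_l (x w r : car QF) : central r -> comm (x ⋅ r) w ≈ comm x w.
Proof. intro C. unfold comm. rewrite ivM. rewrite !opA'. apply op_compat; [reflexivity|].
  rewrite (opA r w), (C w). gn. reflexivity. Qed.
Lemma comm_cr_r (x w r : car QF) : central r -> comm x (w ⋅ r) ≈ comm x w.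
Proof. intro C. unfold comm. rewrite ivM. rewrite !opA'. apply op_compat; [reflexivity|].
  apply op_compat; [reflexivity|]. rewrite (central_iv _ r C (iv w)), (C (iv x ⋅ (iv w ⋅ iv r))).
  gn. reflexivity. Qed.

Lemma comm_eval (u u' w w' : car QF) : ev u = ev u' -> ev w = ev w' -> comm u w ≈ comm u' w'.
Proof. intros Eu Ew.
  assert (Ru : ev (@op F (iv u') u) = one) by (simpl; rewrite ev_app, ev_winv, Eu; gs; reflexivity).
  assert (Rw : ev (@op F (iv w') w) = one) by (simpl; rewrite ev_app, ev_winv, Ew; gs; reflexivity).
  transitivity (comm (u' ⋅ (iv u' ⋅ u)) (w' ⋅ (iv w' ⋅ w))). { gn. reflexivity. }
  rewrite comm_cr_l by (apply R_central; exact Ru). rewrite comm_cr_r by (apply R_central; exact Rw).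
  reflexivity. Qed.

Definition hat (x : G) : car QF := [(true, x)].
Definition cc (x y : G) : car QF := @comm QF (hat x) (hat y).

Lemma ev_hat x : ev (hat x) = x. Proof. simpl. gs; reflexivity. Qed.

Lemma rel1 g g' h : @eqv QF (cc (mul g g') h) (@op QF (cc (cj g g') (cj g h)) (cc g h)).
Proof. unfold cc.
  transitivity (@comm QF (hat g ⋅ hat g') (hat h)).
  { apply comm_eval; simpl; rewrite ?ev_app; simpl; gs; reflexivity. }
  transitivity (@comm QF (hat g ⋅ hat g' ⋅ iv (hat g)) (hat g ⋅ hat h ⋅ iv (hat g)) ⋅ comm (hat g) (hat h)).
  { unfold comm. gn. reflexivity. }
  apply op_compat; [|reflexivity]. apply comm_eval; simpl; rewrite ?ev_app, ?ev_winv; simpl; gs; reflexivity.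
Qed.
Lemma rel2 g h h' : @eqv QF (cc g (mul h h')) (@op QF (cc g h) (cc (cj h g) (cj h h'))).
Proof. unfold cc.
  transitivity (@comm QF (hat g) (hat h ⋅ hat h')).
  { apply comm_eval; simpl; rewrite ?ev_app; simpl; gs; reflexivity. }
  transitivity (@comm QF (hat g) (hat h) ⋅ comm (hat h ⋅ hat g ⋅ iv (hat h)) (hat h ⋅ hat h' ⋅ iv (hat h))).
  { unfold comm. gn. reflexivity. }
  apply op_compat; [reflexivity|]. apply comm_eval; simpl; rewrite ?ev_app, ?ev_winv; simpl; gs; reflexivity.
Qed.

Definition psil (p : bool * (G * G)) : word G :=
  if fst p then cc (fst (snd p)) (snd (snd p)) else winv (cc (fst (snd p)) (snd (snd p))).
Definition psi (w : word (G * G)) : word G := flat_map psil w.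

Lemma psi_app u v : psi (u ++ v) = psi u ++ psi v.
Proof. apply flat_map_app. Qed.
Lemma psi_winv u : psi (winv u) = winv (psi u).
Proof. induction u as [|[b p] u IH]; [reflexivity|].
  rewrite winv_cons, psi_app, IH. simpl. rewrite winv_app. unfold psil; destruct b; simpl;
  rewrite ?app_nil_r, ?winv_winv; reflexivity. Qed.

Lemma psi_peq u v : peq (TR G mul inv) u v -> @eqv QF (psi u) (psi v).
Proof. induction 1.
  - reflexivity.
  - symmetry; auto.
  - etransitivity; eauto.
  - apply QF_of. rewrite !psi_app. simpl.
    change (@eqv F (psi u ++ (psil (b, a) ++ (psil (negb b, a) ++ psi v))) (psi u ++ psi v)).
    assert (E : psil (negb b, a) = winv (psil (b, a))) by (unfold psil; destruct b; simpl; rewrite ?winv_winv; reflexivity).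
    rewrite E. change (@eqv F (@op F (psi u) (@op F (psil (b,a)) (@op F (@iv F (psil (b,a))) (psi v)))) (@op F (psi u) (psi v))).
    rewrite opK. reflexivity.
  - rewrite !psi_app. change (@eqv QF (@op QF (psi u) (@op QF (psi r) (psi v))) (@op QF (psi u) (psi v))).
    assert (Er : @eqv QF (psi r) un).
    { destruct H as [[g [g' [h ->]]]|[g [h [h' ->]]]]; unfold psi; cbn [flat_map]; unfold psil; cbn [fst snd]; rewrite ?app_nil_r.
      - change (@eqv QF (cc (mul g g') h ⋅ (iv (cc g h) ⋅ iv (cc (cj g g') (cj g h)))) un).
        rewrite rel1. gn. reflexivity.
      - change (@eqv QF (cc g (mul h h') ⋅ (iv (cc (cj h g) (cj h h')) ⋅ iv (cc g h))) un).
        rewrite rel2. gn. reflexivity. }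
    rewrite Er, op1l. reflexivity.
Qed.

Lemma FF_psi w : in_FF G w -> exists t, @eqv QF w (psi t).
Proof. induction 1.
  - destruct H as [u [v ->]]. exists [(true, (ev u, ev v))]. unfold psi; cbn [flat_map]; unfold psil; cbn [fst snd]; rewrite ?app_nil_r.
    rewrite wcomm_comm. change (@eqv QF (@comm QF u v) (cc (ev u) (ev v))). unfold cc. apply comm_eval; rewrite ?ev_hat; reflexivity.
  - exists []. reflexivity.
  - destruct IHin_gen1 as [t1 E1], IHin_gen2 as [t2 E2]. exists (t1 ++ t2). rewrite psi_app.
    change (@eqv QF (@op QF u v) (@op QF (psi t1) (psi t2))). rewrite E1, E2. reflexivity.
  - destruct IHin_gen as [t E]. exists (winv t). rewrite psi_winv.
    change (@eqv QF (@iv QF u) (@iv QF (psi t))). rewrite E. reflexivity.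
  - destruct IHin_gen as [t E]. exists t. rewrite <- E. symmetry. apply QF_of. exact H.
Qed.

Lemma psi_wpow t n : psi (wpow t n) = wpow (psi t) n.
Proof. induction n; simpl; [reflexivity|]. rewrite psi_app, IHn. reflexivity. Qed.
Lemma wpow_QF (w : word G) n : wpow w n = @pw QF w n.
Proof. induction n; simpl; [reflexivity| rewrite IHn; reflexivity]. Qed.

Lemma schur_of_tensor N : tensor_exp_dvd G mul inv N -> schur_exp_dvd G mul inv one N.
Proof. intros HT w Hw _. destruct (FF_psi w Hw) as [t E].
  assert (E2 : @eqv QF (wpow w N) un).
  { rewrite wpow_QF, E, <- wpow_QF, <- psi_wpow. apply (psi_peq _ [] (HT t)). }
  simpl in E2. rewrite app_nil_r in E2. exact E2.
Qed.

End Schur.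


Lemma tri_eq k : 2 * tri k + k = k * k.
Proof. induction k; simpl tri; [reflexivity|]. nia. Qed.

Theorem theorem6p3 (G : Type) (mul : G -> G -> G) (inv : G -> G) (one : G)
  (HG : is_group G mul inv one) (d e : nat)
  (Hd : derived_length G mul inv one d) (He : exponent G mul one e) :
  (Nat.Odd e ->
     tensor_exp_dvd G mul inv (e ^ d) /\ schur_exp_dvd G mul inv one (e ^ d)) /\
  (Nat.Even e ->
     tensor_exp_dvd G mul inv (2 ^ (d - 1) * e ^ d) /\
     schur_exp_dvd G mul inv one (2 ^ (d - 1) * e ^ d)).
Proof.
  destruct Hd as [Hd _]. destruct He as [Epos [Hpow _]].
  split.
  - intros [q Hq].
    assert (Ht : tri e = q * e) by (pose proof (tri_eq e); nia).
    assert (T : tensor_exp_dvd G mul inv (e ^ d)).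
    { apply (tensor_main G mul inv one HG (fun i => e ^ i) (fun _ => 1) (fun _ => e) e Hpow); auto.
      - intro i. simpl. ring.
      - intro i. exists q. rewrite Nat.mul_1_l. exact Ht.
      - intro i. exists q. rewrite Nat.mul_1_l. exact Ht. }
    split; [exact T| apply (schur_of_tensor G mul inv one HG); exact T].
  - intros [q Hq]. destruct e as [|p]; [lia|].
    assert (T : tensor_exp_dvd G mul inv (2 ^ (d - 1) * S p ^ d)).
    { apply (tensor_main G mul inv one HG (fun i => 2 ^ (i - 1) * S p ^ i)
        (fun i => if i =? 0 then 1 else 2) (fun i => if i =? 0 then 1 else S p) (S p) Hpow); auto.
      - intro i. destruct i as [|k]; simpl; [ring|]. rewrite Nat.sub_0_r. ring.
      - intro i. destruct i; simpl; auto.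
      - intro i. destruct i; cbn [Nat.eqb]. apply Nat.divide_1_l.
        exists p. pose proof (tri_eq (S p)). nia.
      - intro i. destruct i; cbn [Nat.eqb]. apply Nat.divide_1_l.
        exists (2 * p + 1). pose proof (tri_eq (2 * S p)). nia. }
    split; [exact T| apply (schur_of_tensor G mul inv one HG); exact T].
Qed.
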